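(* Let $n$ and $\rho$ be positive integers with $\rho<n/2$, and let ${\cal C}$ be a binary $[n\times n,\,n(n-2\rho),\,2\rho+1]$ linear array code (the paper uses the optimal array code of this kind constructed by Roth). Define the binary code over graphs $\mathcal{C}_{{\cal G}_2}=\{G=(V_n,L)\mid A_G\in{\cal C}\}$. Then $\mathcal{C}_{{\cal G}_2}$ is a linear binary code over graphs of dimension $k_{\cal G}=n(n-2\rho)$ which is $\rho$-node-erasure-correcting.
   Context: $[n]=\{0,\ldots,n-1\}$, $V_n=\{v_0,\ldots,v_{n-1}\}$. A binary graph $G=(V_n,L)$ is a complete directed graph with self loops and labeling $L:V_n\times V_n\to\{0,1\}$; its adjacency matrix is the $n\times n$ matrix $A_G=[a_{i,j}]$ with $a_{i,j}=L(v_i,v_j)$. A cover of an $n\times n$ matrix $\Gamma=[\gamma_{i,j}]$ is a pair $(S,T)$ of subsets of $[n]$ such that $\gamma_{i,j}\neq0$ implies $i\in S$ or $j\in T$; the cover-weight $w(\Gamma)$ is the minimum of $|S|+|T|$ over all covers. An $[n\times n,k,d]$ linear array code over a field is a $k$-dimensional linear space of $n\times n$ matrices over that field in which every nonzero matrix has cover-weight at least $d$ (with $d$ the minimum). A failure of node $i$ erases the labels of all edges $(v_i,v_j)$ and $(v_j,v_i)$, $j\in[n]$ (i.e., row $i$ and column $i$ of $A_G$), with the failed indices known. A code over graphs is $\rho$-node-erasure-correcting if for every graph in the code and any $\rho$ failed nodes, the erased labels are uniquely determined; its dimension is $\log_2$ of its size. *)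

(* Defs.v *)
From HB Require Import structures.
From mathcomp Require Import all_boot all_order all_algebra.
Set Implicit Arguments. Unset Strict Implicit. Unset Printing Implicit Defensive.
Import GRing.Theory.
Local Open Scope ring_scope.

Definition is_cover (F : nzRingType) (n : nat) (Gamma : 'M[F]_n)
  (S T : {set 'I_n}) : bool :=
  [forall i, forall j, (Gamma i j != 0) ==> (i \in S) || (j \in T)].

(* cover-weight: minimum of |S|+|T| over all covers (S,T); the pair
   (setT,setT) is always a cover of weight 2n, so 2n is a correct default. *)
Definition cover_weight (F : nzRingType) (n : nat) (Gamma : 'M[F]_n) : nat :=
  \big[minn/(n + n)%N]_(p : {set 'I_n} * {set 'I_n} | is_cover Gamma p.1 p.2)
     (#|p.1| + #|p.2|)%N.

Definition is_array_code (F : fieldType) (n : nat) (k d : nat)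
  (C : {vspace 'M[F]_n}) : Prop :=
  [/\ \dim C = k,
      (forall G, G \in C -> G != 0 -> (d <= cover_weight G)%N) &
      (exists2 G, G \in C & (G != 0) && (cover_weight G == d))].

(* binary graphs on V_n = {v_0..v_{n-1}}: labelings L : V_n x V_n -> {0,1} *)
Definition bgraph (n : nat) := {ffun 'I_n * 'I_n -> bool}.

Definition adjmx (n : nat) (G : bgraph n) : 'M['F_2]_n :=
  \matrix_(i, j) (nat_of_bool (G (i, j)))%:R.

Definition graph_code (n : nat) (C : {vspace 'M['F_2]_n}) : {set bgraph n} :=
  [set G : bgraph n | adjmx G \in C].

Definition linear_graph_code (n : nat) (CG : {set bgraph n}) : Prop :=
  [ffun=> false] \in CG /\
  (forall G1 G2, G1 \in CG -> G2 \in CG -> [ffun e => G1 e (+) G2 e] \in CG).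

Definition graph_code_dim (n k : nat) (CG : {set bgraph n}) : Prop :=
  #|CG| = (2 ^ k)%N.

Definition node_erasure_correcting (n rho : nat) (CG : {set bgraph n}) : Prop :=
  forall (G1 G2 : bgraph n) (Fl : {set 'I_n}),
    G1 \in CG -> G2 \in CG -> #|Fl| = rho ->
    (forall i j, i \notin Fl -> j \notin Fl -> G1 (i, j) = G2 (i, j)) ->
    G1 = G2.

(* Main.v *)
Require Import Defs.
From HB Require Import structures.
From mathcomp Require Import all_boot all_order all_algebra all_field.
Import GRing.Theory.
Local Open Scope ring_scope.

Lemma bigminn_le (I : finType) (P : pred I) (F : I -> nat) x j :
  P j -> (\big[minn/x]_(i | P i) F i <= F j)%N.
Proof.
move=> Pj; have: j \in index_enum I by rewrite mem_index_enum.
elim: (index_enum I) => //= a r IH; rewrite big_cons in_cons.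
case/orP=> [/eqP<-|jr]; case: ifP => Pa //.
- by rewrite geq_minl.
- by rewrite Pj in Pa.
- by rewrite (leq_trans (geq_minr _ _) (IH jr)).
- exact: IH.
Qed.


Lemma F2_inj (b c : bool) : ((b : nat)%:R : 'F_2) = (c : nat)%:R -> b = c.
Proof. by case: b; case: c => // /eqP; rewrite ?oner_eq0 // eq_sym oner_eq0. Qed.

Lemma F2_xor (b c : bool) : (((b (+) c) : nat)%:R : 'F_2) = (b : nat)%:R + (c : nat)%:R.
Proof. by case: b; case: c => //=; apply/val_inj. Qed.

Lemma F2_surj (x : 'F_2) : x = ((x != 0 : bool) : nat)%:R.
Proof. by case: x => [[|[|m]] Hm] //; apply/val_inj. Qed.

Lemma cardC (n : nat) (C : {vspace 'M['F_2]_n}) : #|C| = (2 ^ \dim C)%N.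
Proof. by rewrite card_vspace card_Fp. Qed.

Lemma adjmx_inj (n : nat) : injective (@adjmx n).
Proof.
move=> G1 G2 /matrixP H; apply/ffunP => -[i j].
by have := H i j; rewrite !mxE => /F2_inj.
Qed.

Theorem theorem2 (n rho : nat) (C : {vspace 'M['F_2]_n}) :
  (0 < n)%N -> (0 < rho)%N -> (rho.*2 < n)%N ->
  @is_array_code _ n (n * (n - rho.*2)) rho.*2.+1 C ->
  [/\ linear_graph_code (graph_code C),
      graph_code_dim (n * (n - rho.*2)) (graph_code C) &
      node_erasure_correcting rho (graph_code C)].
Proof.
move=> n0 r0 rn [dimC wC _]; split.
- split.
  + rewrite inE; have -> : adjmx [ffun=> false] = 0 :> 'M['F_2]_n.
      by apply/matrixP => i j; rewrite !mxE ffunE.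
    exact: mem0v.
  + move=> G1 G2; rewrite !inE => H1 H2.
    have -> : adjmx [ffun e => G1 e (+) G2 e] = adjmx G1 + adjmx G2.
      by apply/matrixP => i j; rewrite !mxE ffunE F2_xor.
    exact: memvD.
- rewrite /graph_code_dim -dimC -cardC -(card_imset _ (@adjmx_inj n)).
  apply: eq_card => M; apply/imsetP/idP.
  + by case=> G; rewrite inE => HG ->.
  + move=> HM; exists [ffun e => M e.1 e.2 != 0]; first rewrite inE.
    * suff -> : adjmx [ffun e => M e.1 e.2 != 0] = M by [].
      by apply/matrixP => i j; rewrite !mxE ffunE /= -F2_surj.
    * by apply/matrixP => i j; rewrite !mxE ffunE /= -F2_surj.
- move=> G1 G2 Fl; rewrite !inE => H1 H2 cF Hag.
  apply: adjmx_inj; apply/eqP; rewrite -subr_eq0; apply/negPn/negP => nz.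
  have := wC _ (memvB H1 H2) nz.
  have cov : is_cover (adjmx G1 - adjmx G2) Fl Fl.
    apply/forallP => i; apply/forallP => j; apply/implyP.
    rewrite !mxE; apply: contraR; rewrite negb_or => /andP[ni nj].
    by rewrite (Hag i j ni nj) subrr.
  have := @bigminn_le _ (fun p : {set 'I_n} * {set 'I_n} =>
     is_cover (adjmx G1 - adjmx G2) p.1 p.2) (fun p => #|p.1| + #|p.2|)%N
     (n + n)%N (Fl, Fl) cov.
  rewrite /cover_weight /= cF addnn => le1 le2.
  by have := leq_trans le2 le1; rewrite addnn ltnn.
Qed.
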